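(* Let $U$ be a unitary acting on $n$ qubits and let $\{u_1,\ldots,u_{2^n}\}$ be the columns of $U$. The unitary $U$ can be simulated using the unitary \[ U'=|0\rangle\langle 1|\otimes U+|1\rangle\langle 0|\otimes U^{\dagger}. \] The unitary $U'$ is a product of reflection operators constructed from the family of unit vectors \[ |w_j^{\pm}\rangle=\left(|1\rangle\otimes|j\rangle\pm|0\rangle\otimes|u_j\rangle\right)/\sqrt{2},\quad j=1,\ldots,2^n. \]
   Context: For a unit vector $|\psi\rangle$, the reflection operator is $R_{|\psi\rangle}=\mathbb{I}-2|\psi\rangle\langle\psi|$. Here $|j\rangle$ denotes the computational basis states of $n$ qubits and $|u_j\rangle$ the state given by the $j$-th column of $U$. ''Simulated'' means $U'$ maps $|1\rangle\otimes|\phi\rangle$ to $|0\rangle\otimes U|\phi\rangle$ for every $n$-qubit state $|\phi\rangle$ (using one ancilla qubit). *)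

(* Defs.v *)
From mathcomp Require Import all_boot all_order all_algebra.
From mathcomp Require Import spectral.
From mathcomp Require mxtens.
Set Implicit Arguments.
Unset Strict Implicit.
Unset Printing Implicit Defensive.
Import Order.TTheory GRing.Theory Num.Theory.
Local Open Scope ring_scope.

Section QDefs.
Context {C : numClosedFieldType}.

Definition adj {m n} (A : 'M[C]_(m, n)) : 'M[C]_(n, m) := (A ^t*)%sesqui.

(* Kronecker (tensor) product  A (x) B ; first factor = most significant index *)
Definition tens {m n p q} (A : 'M[C]_(m, n)) (B : 'M[C]_(p, q))
  : 'M[C]_(m * p, n * q) := mxtens.tensmx A B.

Definition ket {d} (k : 'I_d) : 'cV[C]_d := delta_mx k 0.

Definition ket0 : 'cV[C]_2 := ket (0 : 'I_2).
Definition ket1 : 'cV[C]_2 := ket (1 : 'I_2).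

Definition refl {d} (psi : 'cV[C]_d) : 'M[C]_d :=
  1%:M - 2%:R *: (psi *m adj psi).

Definition Uprime {N} (U : 'M[C]_N) : 'M[C]_(2 * N) :=
  tens (ket0 *m adj ket1) U + tens (ket1 *m adj ket0) (adj U).

Definition w_plus {N} (U : 'M[C]_N) (j : 'I_N) : 'cV[C]_(2 * N) :=
  (sqrtC 2%:R)^-1 *: (tens ket1 (ket j) + tens ket0 (col j U)).
Definition w_minus {N} (U : 'M[C]_N) (j : 'I_N) : 'cV[C]_(2 * N) :=
  (sqrtC 2%:R)^-1 *: (tens ket1 (ket j) - tens ket0 (col j U)).

Definition unit_vec {d} (v : 'cV[C]_d) : Prop := adj v *m v = 1%:M.

End QDefs.

(* Main.v *)
Require Import Defs.
From mathcomp Require Import all_boot all_order all_algebra.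
From mathcomp Require Import spectral.
From mathcomp Require mxtens.
From mathcomp Require Import ring.
Import GRing.Theory Num.Theory.
Local Open Scope ring_scope.
Section H1.
Variable C : numClosedFieldType.

Lemma adjEs m n (A : 'M[C]_(m,n)) i j : adj A i j = (A j i)^*.
Proof. by rewrite /adj !mxE. Qed.

Lemma adjMs m n p (A : 'M[C]_(m,n)) (B : 'M[C]_(n,p)) : adj (A *m B) = adj B *m adj A.
Proof.
apply/matrixP=> i j; rewrite adjEs !mxE rmorph_sum; apply: eq_bigr => k _.
by rewrite rmorphM !adjEs mulrC.
Qed.

Lemma adjDs m n (A B : 'M[C]_(m,n)) : adj (A + B) = adj A + adj B.
Proof. by apply/matrixP=> i j; rewrite !(adjEs, mxE) rmorphD. Qed.

Lemma adjNs m n (A : 'M[C]_(m,n)) : adj (- A) = - adj A.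
Proof. by apply/matrixP=> i j; rewrite !(adjEs, mxE) rmorphN. Qed.

Lemma adjBs m n (A B : 'M[C]_(m,n)) : adj (A - B) = adj A - adj B.
Proof. by rewrite adjDs adjNs. Qed.

Lemma adjZs m n c (A : 'M[C]_(m,n)) : adj (c *: A) = c^* *: adj A.
Proof. by apply/matrixP=> i j; rewrite !(adjEs, mxE) rmorphM. Qed.

Lemma adjKs m n (A : 'M[C]_(m,n)) : adj (adj A) = A.
Proof. by apply/matrixP=> i j; rewrite !adjEs conjCK. Qed.

Lemma adj_delta m n (i : 'I_m) (j : 'I_n) : adj (delta_mx i j : 'M[C]_(m,n)) = delta_mx j i.
Proof. by apply/matrixP=> a b; rewrite adjEs !mxE rmorph_nat andbC. Qed.

Lemma tensDl m n p q (A B : 'M[C]_(m,n)) (M : 'M[C]_(p,q)) :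
  tens (A + B) M = tens A M + tens B M.
Proof. by apply/matrixP=> i j; rewrite !mxE mulrDl. Qed.
Lemma tensDr m n p q (A : 'M[C]_(m,n)) (M N : 'M[C]_(p,q)) :
  tens A (M + N) = tens A M + tens A N.
Proof. by apply/matrixP=> i j; rewrite !mxE mulrDr. Qed.
Lemma tensNl m n p q (A : 'M[C]_(m,n)) (M : 'M[C]_(p,q)) :
  tens (- A) M = - tens A M.
Proof. by apply/matrixP=> i j; rewrite !mxE mulNr. Qed.
Lemma tensNr m n p q (A : 'M[C]_(m,n)) (M : 'M[C]_(p,q)) :
  tens A (- M) = - tens A M.
Proof. by apply/matrixP=> i j; rewrite !mxE mulrN. Qed.
Lemma tensZl m n p q c (A : 'M[C]_(m,n)) (M : 'M[C]_(p,q)) :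
  tens (c *: A) M = c *: tens A M.
Proof. by apply/matrixP=> i j; rewrite !mxE mulrA. Qed.
Lemma tensZr m n p q c (A : 'M[C]_(m,n)) (M : 'M[C]_(p,q)) :
  tens A (c *: M) = c *: tens A M.
Proof. by apply/matrixP=> i j; rewrite !mxE mulrCA. Qed.
Lemma tens0l m n p q (M : 'M[C]_(p,q)) : tens (0 : 'M[C]_(m,n)) M = 0.
Proof. by apply/matrixP=> i j; rewrite !mxE mul0r. Qed.
Lemma tens_sumr m n p q (A : 'M[C]_(m,n)) (I : finType) (F : I -> 'M[C]_(p,q)) :
  tens A (\sum_i F i) = \sum_i tens A (F i).
Proof.
apply/matrixP=> i j; rewrite !mxE summxE mulr_sumr summxE. idtac.
by apply: eq_bigr => k _; rewrite !mxE.
Qed.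
Lemma tensM m n p q r s (A : 'M[C]_(m,n)) (B : 'M[C]_(p,q)) (A' : 'M[C]_(n,r)) (B' : 'M[C]_(q,s)) :
  tens A B *m tens A' B' = tens (A *m A') (B *m B').
Proof. exact: mxtens.tensmx_mul. Qed.
Lemma adj_tens m n p q (A : 'M[C]_(m,n)) (B : 'M[C]_(p,q)) :
  adj (tens A B) = tens (adj A) (adj B).
Proof. by apply/matrixP=> i j; rewrite !(adjEs, mxE) rmorphM. Qed.
Lemma tens11 m n : tens (1%:M : 'M[C]_m) (1%:M : 'M[C]_n) = 1%:M.
Proof.
apply/matrixP=> i j.
case: (mxtens.mxtens_indexP i) => i1 i2; case: (mxtens.mxtens_indexP j) => j1 j2.
rewrite /tens mxtens.tensmxE !mxE.
rewrite (inj_eq (can_inj (@mxtens.mxtens_indexK _ _))) xpair_eqE.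
by case: (i1 == j1); case: (i2 == j2); rewrite /= ?mulr1 ?mulr0 ?mul0r.
Qed.
Lemma tens_scal (a b : C) : tens (a%:M : 'M[C]_1) (b%:M : 'M[C]_1) = (a * b)%:M.
Proof.
apply/matrixP=> i j; rewrite !mxE !ord1 /=.
by rewrite mulr1n.
Qed.
End H1.
Section H2.
Variable C : numClosedFieldType.

Lemma prod_refl d (I : eqType) (s : seq I) (v : I -> 'cV[C]_d) :
  uniq s -> (forall a b, a != b -> adj (v a) *m v b = 0) ->
  \big[mulmx/1%:M]_(j <- s) refl (v j) = 1%:M - 2%:R *: \sum_(j <- s) v j *m adj (v j).
Proof.
move=> + orth; elim: s => [|a s IH] /=.
  by rewrite big_nil big_nil scaler0 subr0.
case/andP=> as_ us; rewrite big_cons IH // big_cons /refl.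
have P0 : v a *m adj (v a) *m \sum_(j <- s) v j *m adj (v j) = 0.
  rewrite mulmx_sumr big_seq big1 // => j js.
  rewrite mulmxA -(mulmxA (v a)) orth ?mulmx0 ?mul0mx //.
  by apply: contraNneq as_ => ->.
rewrite mulmxBr mulmx1 mulmxBl mul1mx -scalemxAl -scalemxAr P0 !scaler0 subr0.
by rewrite scalerDr opprD addrA.
Qed.

Lemma sum_ket n : \sum_(j < n) (ket j : 'cV[C]_n) *m adj (ket j) = 1%:M.
Proof.
apply/matrixP=> i k; rewrite summxE (bigD1 i) //= big1 ?addr0.
  by rewrite /ket adj_delta mul_delta_mx !mxE eqxx /= eq_sym; case: (i == k).
by move=> j ji; rewrite /ket adj_delta mul_delta_mx mxE eq_sym (negbTE ji).
Qed.
End H2.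
Section H3.
Variable C : numClosedFieldType.

Lemma scal0 n : (0 : C)%:M = 0 :> 'M[C]_n.
Proof. by apply/matrixP=> i j; rewrite !mxE mul0rn. Qed.

Lemma ketdot d (i j : 'I_d) : adj (ket i : 'cV[C]_d) *m ket j = (i == j)%:R%:M.
Proof.
rewrite /ket adj_delta mul_delta_mx_cond; apply/matrixP=> a b.
by rewrite !ord1; case: (i == j); rewrite ?mulr1n ?mulr0n !mxE.
Qed.

Lemma ketout d (i j : 'I_d) : (ket i : 'cV[C]_d) *m adj (ket j) = delta_mx i j.
Proof. by rewrite /ket adj_delta mul_delta_mx. Qed.

Lemma P01 : delta_mx (0 : 'I_2) (0 : 'I_2) + delta_mx 1 1 = 1%:M :> 'M[C]_2.
Proof.
apply/matrixP=> i j; rewrite !mxE.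
by case: i => [[|[|i]] Hi] //; case: j => [[|[|j]] Hj] //=; rewrite ?addr0 ?add0r.
Qed.

Definition s : C := (sqrtC 2%:R)^-1.
Lemma s_conj : s^* = s.
Proof. rewrite /s fmorphV; congr (_^-1); apply: conj_Creal; by rewrite ger0_real // sqrtC_ge0 ler0n. Qed.
Lemma s_sq : 2%:R * (s^* * s) = 1.
Proof.
rewrite s_conj -expr2 /s exprVn sqrtCK mulfV //.
by rewrite pnatr_eq0.
Qed.
Lemma s_sq' : 2%:R * (s * s^*) = 1.
Proof. by rewrite [s * _]mulrC s_sq. Qed.

Variable N : nat.
Variable U : 'M[C]_N.
Hypothesis HU : U \is unitarymx.

Lemma UU : U *m adj U = 1%:M.
Proof. by have /unitarymxP := HU. Qed.
Lemma aUU : adj U *m U = 1%:M.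
Proof. exact: mulmx1C UU. Qed.

Lemma adjT (x : 'cV[C]_2) (y : 'cV[C]_N) :
  adj (tens x y : 'cV[C]_(2 * N)) = (tens (adj x) (adj y) : 'rV[C]_(2 * N)).
Proof. exact: (@adj_tens C 2 1 N 1 x y). Qed.
Lemma tensMi (a : 'rV[C]_2) (b : 'rV[C]_N) (x : 'cV[C]_2) (y : 'cV[C]_N) :
  (tens a b : 'rV[C]_(2 * N)) *m (tens x y : 'cV[C]_(2 * N)) = (tens (a *m x) (b *m y) : 'M[C]_1).
Proof. exact: (@tensM C 1 2 1 N 1 1 a b x y). Qed.
Lemma tensMo (x : 'cV[C]_2) (y : 'cV[C]_N) (a : 'rV[C]_2) (b : 'rV[C]_N) :
  (tens x y : 'cV[C]_(2 * N)) *m (tens a b : 'rV[C]_(2 * N)) = tens (x *m a) (y *m b).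
Proof. exact: (@tensM C 2 1 N 1 2 N x y a b). Qed.

Definition e (j : 'I_N) : 'cV[C]_(2 * N) := tens ket1 (ket j).
Definition f (j : 'I_N) : 'cV[C]_(2 * N) := tens ket0 (col j U).

Lemma colK j : col j U = U *m ket j.
Proof. by rewrite colE. Qed.

Lemma ee j k : adj (e j) *m e k = (j == k)%:R%:M.
Proof. by rewrite /e (adjT ket1 (ket j)) tensMi !ketdot tens_scal mul1r. Qed.
Lemma ff j k : adj (f j) *m f k = (j == k)%:R%:M.
Proof.
rewrite /f (adjT ket0 (col j U)) tensMi !colK adjMs mulmxA -(mulmxA _ (adj U)) aUU mulmx1.
by rewrite !ketdot tens_scal mul1r.
Qed.
Lemma ef j k : adj (e j) *m f k = 0.
Proof. by rewrite /e /f (adjT ket1 (ket j)) tensMi ketdot /= scal0 tens0l. Qed.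
Lemma fe j k : adj (f j) *m e k = 0.
Proof. by rewrite /e /f (adjT ket0 (col j U)) tensMi ketdot /= scal0 tens0l. Qed.

Lemma wmE j : w_minus U j = s *: (e j - f j). Proof. by []. Qed.
Lemma wpE j : w_plus U j = s *: (e j + f j). Proof. by []. Qed.

Lemma wm_dot j k : adj (w_minus U j) *m w_minus U k = (j == k)%:R%:M.
Proof.
rewrite !wmE adjZs adjBs -scalemxAl -scalemxAr scalerA.
rewrite mulmxBl !mulmxBr ee ff ef fe !subr0.
apply/matrixP=> a b; rewrite !mxE !ord1 /= mulr1n.
by move: ((j == k)%:R) => x; rewrite -[RHS]mul1r -s_sq; ring.
Qed.
Lemma wp_dot j k : adj (w_plus U j) *m w_plus U k = (j == k)%:R%:M.
Proof.
rewrite !wpE adjZs adjDs -scalemxAl -scalemxAr scalerA.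
rewrite mulmxDl !mulmxDr ee ff ef fe !addr0 add0r.
apply/matrixP=> a b; rewrite !mxE !ord1 /= mulr1n.
by move: ((j == k)%:R) => x; rewrite -[RHS]mul1r -s_sq; ring.
Qed.

Lemma tensMv (A : 'M[C]_2) (B : 'M[C]_N) (x : 'cV[C]_2) (y : 'cV[C]_N) :
  tens A B *m (tens x y : 'cV[C]_(2 * N)) = (tens (A *m x) (B *m y) : 'cV[C]_(2 * N)).
Proof. exact: (@tensM C 2 2 N N 1 1 A B x y). Qed.

Lemma see : \sum_j e j *m adj (e j) = tens (delta_mx 1 1) 1%:M.
Proof.
rewrite /e; under eq_bigr => j _ do rewrite adjT tensMo.
by rewrite -tens_sumr sum_ket ketout.
Qed.
Lemma sff : \sum_j f j *m adj (f j) = tens (delta_mx 0 0) 1%:M.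
Proof.
rewrite /f; under eq_bigr => j _ do rewrite adjT tensMo colK adjMs mulmxA -(mulmxA U).
by rewrite -tens_sumr -mulmx_suml -mulmx_sumr sum_ket mulmx1 UU ketout.
Qed.
Lemma sef : \sum_j e j *m adj (f j) = tens (delta_mx 1 0) (adj U).
Proof.
rewrite /e /f; under eq_bigr => j _ do rewrite adjT tensMo colK adjMs mulmxA.
by rewrite -tens_sumr -mulmx_suml sum_ket mul1mx ketout.
Qed.
Lemma sfe : \sum_j f j *m adj (e j) = tens (delta_mx 0 1) U.
Proof.
rewrite /e /f; under eq_bigr => j _ do rewrite adjT tensMo colK -mulmxA.
by rewrite -tens_sumr -mulmx_sumr sum_ket mulmx1 ketout.
Qed.

Lemma UprimeE : Uprime U = tens (delta_mx 0 1) U + tens (delta_mx 1 0) (adj U).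
Proof. by rewrite /Uprime !ketout. Qed.

Lemma one_tens : 1%:M = tens (delta_mx 0 0) 1%:M + tens (delta_mx 1 1) 1%:M :> 'M[C]_(2 * N).
Proof. by rewrite -tensDl P01 tens11. Qed.

Lemma sum_wm : \sum_j w_minus U j *m adj (w_minus U j) =
  (s * s^*) *: ((tens (delta_mx 1 1) 1%:M - tens (delta_mx 1 0) (adj U))
                - (tens (delta_mx 0 1) U - tens (delta_mx 0 0) 1%:M)).
Proof.
under eq_bigr => j _ do rewrite wmE adjZs adjBs -scalemxAl -scalemxAr scalerA mulmxBl !mulmxBr.
by rewrite -scaler_sumr !sumrB see sef sfe sff.
Qed.
Lemma sum_wp : \sum_j w_plus U j *m adj (w_plus U j) =
  (s * s^*) *: ((tens (delta_mx 1 1) 1%:M + tens (delta_mx 1 0) (adj U))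
                + (tens (delta_mx 0 1) U + tens (delta_mx 0 0) 1%:M)).
Proof.
under eq_bigr => j _ do rewrite wpE adjZs adjDs -scalemxAl -scalemxAr scalerA mulmxDl !mulmxDr.
by rewrite -scaler_sumr !big_split see sef sfe sff.
Qed.

Lemma prod_wm : \big[mulmx/1%:M]_(j < N) refl (w_minus U j) = Uprime U.
Proof.
have orth : forall a b, a != b -> adj (w_minus U a) *m w_minus U b = 0.
  by move=> a b ab; rewrite wm_dot (negbTE ab) scal0.
rewrite prod_refl ?index_enum_uniq //.
rewrite sum_wm scalerA s_sq' scale1r UprimeE one_tens.
by apply/matrixP=> a b; rewrite !mxE; ring.
Qed.
Lemma prod_wp : \big[mulmx/1%:M]_(j < N) refl (w_plus U j) = - Uprime U.
Proof.
have orth : forall a b, a != b -> adj (w_plus U a) *m w_plus U b = 0.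
  by move=> a b ab; rewrite wp_dot (negbTE ab) scal0.
rewrite prod_refl ?index_enum_uniq //.
rewrite sum_wp scalerA s_sq' scale1r UprimeE one_tens.
by apply/matrixP=> a b; rewrite !mxE; ring.
Qed.

Lemma Uprime_unitary : Uprime U \is unitarymx.
Proof.
apply/unitarymxP; change (Uprime U *m adj (Uprime U) = 1%:M); rewrite UprimeE adjDs !adj_tens !adj_delta adjKs.
rewrite mulmxDl !mulmxDr !tensM !mul_delta_mx_cond /= !mulr0n !mulr1n !tens0l.
by rewrite addr0 add0r UU aUU -tensDl P01 tens11.
Qed.

Lemma Uprime_act (phi : 'cV[C]_N) : Uprime U *m tens ket1 phi = tens ket0 (U *m phi).
Proof.
rewrite UprimeE mulmxDl !tensMv /ket1 /ket0 /ket !mul_delta_mx_cond /=.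
by rewrite mulr0n mulr1n tens0l addr0.
Qed.

End H3.

Theorem lemma3 (C : numClosedFieldType) (n : nat) (U : 'M[C]_(2 ^ n))
    (HU : U \is unitarymx) :
  [/\ Uprime U \is unitarymx,
      (forall phi : 'cV[C]_(2 ^ n),
          Uprime U *m tens ket1 phi = tens ket0 (U *m phi)),
      (forall j : 'I_(2 ^ n), unit_vec (w_plus U j) /\ unit_vec (w_minus U j)),
      Uprime U = \big[mulmx/1%:M]_(j < 2 ^ n) refl (w_minus U j)
    & - Uprime U = \big[mulmx/1%:M]_(j < 2 ^ n) refl (w_plus U j)].
Proof.
split.
- exact: Uprime_unitary.
- exact: Uprime_act.
- by move=> j; rewrite /unit_vec (@wp_dot _ _ _ HU) (@wm_dot _ _ _ HU) eqxx.
- by rewrite (@prod_wm _ _ _ HU).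
- by rewrite (@prod_wp _ _ _ HU).
Qed.
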